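(* Let $q\geq 3$ be an odd prime power and $m\geq 2$. Then the second largest odd coset leader modulo $q^m-1$ is $$\delta_2=(q-1)q^{m-1}-q^{\lfloor\frac{2m-1}{3}\rfloor}-q^{\lfloor\frac{m-1}{3}\rfloor}-1.$$
   Context: The $q$-cyclotomic coset of $i$ modulo $q^m-1$ is $\{i,iq,iq^2,\ldots\}\bmod(q^m-1)$; its smallest element is its coset leader. An odd coset leader is a coset leader that is an odd integer. *)

(* Defs.v *)
From mathcomp Require Import all_boot.

(* The q-cyclotomic coset of i modulo n = q^m - 1 is {i * q^j mod n | j : nat}. *)
Definition coset_leader (q m i : nat) : Prop :=
  i < q ^ m - 1 /\ forall j : nat, i <= (i * q ^ j) %% (q ^ m - 1).

Definition odd_coset_leader (q m i : nat) : Prop :=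
  odd i /\ coset_leader q m i.

Definition prime_power (q : nat) : Prop :=
  exists p k : nat, prime p /\ 0 < k /\ q = p ^ k.

Definition second_largest_odd_coset_leader (q m d : nat) : Prop :=
  odd_coset_leader q m d /\
  exists d1 : nat, d < d1 /\ odd_coset_leader q m d1 /\
    forall x : nat, odd_coset_leader q m x -> d < x -> x = d1.

(* Main.v *)
Require Import Defs.
From mathcomp Require Import all_boot zify.
Ltac elia := repeat match goal with H : context[expn _ _] |- _ => clear H end; lia.
Ltac gen_pows := intros;
  repeat match goal with H : context[expn _ _] |- _ => revert H end;
  repeat match goal with |- context[expn ?q ?e] => let X := fresh "X" in generalize (expn q e) => X end.
Ltac plia := gen_pows; repeat match goal with H : context[subn _ _] |- _ => clear H end; lia.
Ltac pnia := gen_pows; repeat match goal with H : context[subn _ _] |- _ => clear H end; nia.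

Definition rot (q m j y : nat) := y %% q^(m-j) * q^j + y %/ q^(m-j).

Lemma logP q z : 1 < q -> 0 < z -> exists t, q^t <= z < q^t.+1.
Proof. move=> hq hz; exists (trunc_log q z); rewrite trunc_logP // trunc_log_ltn //. Qed.

Lemma pw q i e : i <= e -> q^e = q^(e-i) * q^i.
Proof. by move=> h; rewrite -expnD subnK. Qed.

Lemma rot_split q m j hi lo : j <= m -> lo < q^(m-j) ->
  rot q m j (hi * q^(m-j) + lo) = lo * q^j + hi.
Proof.
move=> hj hlo; rewrite /rot modnMDl modn_small // divnMDl ?divn_small ?addn0 //.
exact: leq_ltn_trans (leq0n lo) hlo.
Qed.

Lemma rot_splitP q m P hi lo : P <= m -> lo < q^P ->
  rot q m (m-P) (hi * q^P + lo) = lo * q^(m-P) + hi.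
Proof.
move=> hP hlo; have e : m - (m - P) = P by lia.
have := @rot_split q m (m-P) hi lo; rewrite e; apply; rewrite ?leq_subr //.
Qed.

Lemma decomp q m j x : 1 < q -> j <= m -> x < q^m ->
  exists u v, [/\ x = u * q^(m-j) + v, u < q^j, v < q^(m-j) & q^m = q^(m-j) * q^j].
Proof.
move=> hq hj hx.
have e : q^m = q^(m-j) * q^j by rewrite -expnD subnK.
have hB : 0 < q^(m-j) by rewrite expn_gt0; lia.
exists (x %/ q^(m-j)), (x %% q^(m-j)); split => //.
- exact: divn_eq.
- by rewrite ltn_divLR // mulnC -e.
- by rewrite ltn_mod.
Qed.

Lemma rot_mod q m j x : 1 < q -> j <= m -> x < q^m - 1 ->
  (x * q^j) %% (q^m - 1) = rot q m j x.
Proof.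
move=> hq hj hx.
have [u [v [ex hu hv e]]] := @decomp q m j x hq hj (leq_trans hx (leq_subr _ _)).
have hA : 0 < q^j by rewrite expn_gt0; lia.
rewrite ex rot_split //.
move: hx; rewrite e ex => hx.
set A := q^j in hx hu hA *; set B := q^(m-j) in hx hv *.
have -> : (u * B + v) * A = u * (B * A - 1) + (v * A + u).
  have : 1 <= B * A by rewrite muln_gt0; lia.
  nia.
rewrite modnMDl modn_small //.
have [hv'|hv'] : v < B - 1 \/ v = B - 1 by lia.
- nia.
- subst v. nia.
Qed.

Lemma rot_compl q m j x : 1 < q -> j <= m -> x <= q^m - 1 ->
  rot q m j (q^m - 1 - x) = q^m - 1 - rot q m j x.
Proof.
move=> hq hj hx.
have hq0 : 0 < q^m by rewrite expn_gt0; lia.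
have hxm : x < q^m by lia.
have [u [v [ex hu hv e]]] := @decomp q m j x hq hj hxm.
have hA : 0 < q^j by rewrite expn_gt0; lia.
rewrite ex rot_split //.
move: hx; rewrite e ex => hx.
set A := q^j in hx hu hA *; set B := q^(m-j) in hx hv *.
have -> : B * A - 1 - (u * B + v) = (A - 1 - u) * B + (B - 1 - v) by nia.
rewrite rot_split; last by rewrite /B; lia.
2: done.
nia.
Qed.

Lemma leader_of_ymax q m x : 2 < q -> 0 < m -> x < q^m - 1 ->
  (forall j, j <= m -> rot q m j (q^m - 1 - x) <= q^m - 1 - x) ->
  coset_leader q m x.
Proof.
move=> hq3 hm hx hy; have hq : 1 < q by lia.
split => // j.
have hn : 1 < q^m - 1.
  have : q^1 <= q^m by rewrite leq_exp2l //; lia.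
  rewrite expn1. lia.
rewrite (divn_eq j m) [j %/ m * m]mulnC expnD expnM mulnCA -modnMml -modnXm.
have -> : q^m %% (q^m - 1) = 1.
  rewrite {1}(_ : q^m = 1 * (q^m - 1) + 1); last by lia.
  rewrite modnMDl modn_small //.
rewrite exp1n [1 %% _]modn_small // mul1n.
have hj : j %% m <= m by rewrite ltnW // ltn_mod.
rewrite rot_mod //.
have := hy _ hj; rewrite rot_compl //; last by lia.
have := ltn_pmod (x * q ^ (j %% m)) (ltnW hn); rewrite rot_mod //; lia.
Qed.

Lemma ymax_of_leader q m x : 1 < q -> x < q^m - 1 -> coset_leader q m x ->
  forall j, j <= m -> rot q m j (q^m - 1 - x) <= q^m - 1 - x.
Proof.
move=> hq hx [_ hl] j hj.
rewrite rot_compl //; last by lia.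
have := hl j; rewrite rot_mod //. lia.
Qed.

Lemma pl q i j : 0 < q -> i <= j -> q^i <= q^j.
Proof. by move=> hq hij; rewrite leq_pexp2l. Qed.

Lemma p3 q i j : 2 < q -> i < j -> 3 * q^i <= q^j.
Proof.
move=> hq hij; apply: (@leq_trans (q^i.+1)).
  by rewrite expnS leq_mul2r hq orbT.
apply: pl => //; lia.
Qed.

Lemma rot0 q m y : y < q^m -> rot q m 0 y = y.
Proof. by move=> h; rewrite /rot subn0 expn0 muln1 modn_small // divn_small // addn0. Qed.

Lemma rotm q m y : rot q m m y = y.
Proof. by rewrite /rot subnn expn0 modn1 divn1. Qed.

Lemma ymaxY1 q m : 2 < q -> 0 < m -> forall j, j <= m ->
  rot q m j (q^(m-1)) <= q^(m-1).
Proof.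
move=> hq hm j hj.
have [->|j0] := eqVneq j 0.
  by rewrite rot0 // ltn_exp2l; lia.
have e : q^(m-1) = q^(m-1-(m-j)) * q^(m-j) + 0 by rewrite addn0 -expnD; congr (q ^ _); lia.
rewrite {1}e rot_split //; last by rewrite expn_gt0; lia.
rewrite mul0n add0n; apply: pl; lia.
Qed.


Lemma ymaxY2 q m a b k : 2 < q -> 1 < m -> b < a -> a + k = m - 1 ->
  b + k <= a -> k <= b + 1 -> (m - 2 - b = a -> a - b - 1 <= b) ->
  forall j, j <= m ->
  rot q m j (q^(m-1) + q^a + q^b) <= q^(m-1) + q^a + q^b.
Proof.
move=> hq hm hba hak hbk hkb htie j hj.
have q0 : 0 < q by elia.
have [->|j0] := eqVneq j 0.
  rewrite rot0 //.
  have := @p3 q (m-1) m hq ltac:(elia); have := @pl q (a) (m-1) q0 ltac:(elia); have := @p3 q (b) (m-1) hq ltac:(elia); have : 0 < q^b by rewrite expn_gt0 q0.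
  plia.
have [->|jm] := eqVneq j m; first by rewrite rotm.
have hP : 0 < q^(m-j) by rewrite expn_gt0; elia.
have h3 := @p3 q (m-2) (m-1) hq ltac:(elia).
have [hjk|hjk] := leqP j k.
  have e : q^(m-1) + q^a + q^b = q^(j-1) * q^(m-j) + (q^a + q^b).
    by rewrite addnA -expnD; congr (q ^ _ + _ + _); elia.
  rewrite e rot_split //; last first.
    have := @p3 q a (m-j) hq ltac:(elia); have := @pl q (b) (a) q0 ltac:(elia); plia.
  rewrite -e mulnDl -!expnD.
  have [hjk'|hjk'] := ltnP j k.
    have := @pl q (a + j) (m-2) q0 ltac:(elia); have := @pl q (b + j) (m-2) q0 ltac:(elia);
    have := @pl q (j - 1) (m-2) q0 ltac:(elia). plia.
  have ej : j = k by elia.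
  rewrite ej (_ : a + k = m - 1) //.
  have [hl|he] := ltnP (b + k) a.
    have := @p3 q (b+k) a hq ltac:(elia); have := @p3 q (k-1) a hq ltac:(elia); plia.
  have eb : b + k = a by elia.
  rewrite eb; have := @pl q (k - 1) (b) q0 ltac:(elia); plia.
have [hjb|hjb] := leqP j (m-1-b).
  have e : q^(m-1) + q^a + q^b = (q^(m-1-(m-j)) + q^(a-(m-j))) * q^(m-j) + q^b.
    by rewrite mulnDl -!expnD; congr (q ^ _ + q ^ _ + _); elia.
  rewrite {1}e rot_split //; last by rewrite ltn_exp2l; elia.
  rewrite -expnD.
  have [hjb'|hjb'] := ltnP j (m-1-b).
    have := @pl q (b + j) (m-2) q0 ltac:(elia); have := @pl q (m - 1 - (m - j)) (m-2) q0 ltac:(elia);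
    have := @pl q (a - (m - j)) (m-2) q0 ltac:(elia). plia.
  have ej : j = m - 1 - b by elia.
  rewrite ej (_ : b + (m - 1 - b) = m - 1); last by elia.
  rewrite (_ : m - 1 - (m - (m - 1 - b)) = m - 2 - b); last by elia.
  rewrite (_ : a - (m - (m - 1 - b)) = a - b - 1); last by elia.
  have [hl|he] := ltnP (m - 2 - b) a.
    have := @p3 q (m-2-b) a hq ltac:(elia); have := @p3 q (a-b-1) a hq ltac:(elia); plia.
  have ea : m - 2 - b = a by elia.
  rewrite ea; have := @pl q _ _ q0 (htie ea); plia.
have e : q^(m-1) + q^a + q^b =
  (q^(m-1-(m-j)) + q^(a-(m-j)) + q^(b-(m-j))) * q^(m-j) + 0.
  by rewrite addn0 !mulnDl -!expnD; congr (q ^ _ + q ^ _ + q ^ _); elia.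
rewrite {1}e rot_split // mul0n add0n e addn0.
by rewrite leq_pmulr.
Qed.

Lemma excl q m a b k y : 2 < q -> odd q -> 1 < m -> a + k = m - 1 -> b < a ->
  b <= k -> k <= b + 1 -> 3 * k <= m -> m <= 3 * k + 2 -> (b = k -> 3 * k < m) ->
  odd y -> 0 < y -> y < q^(m-1) + q^a + q^b ->
  (forall j, j <= m -> rot q m j y <= y) -> y = q^(m-1).
Proof.
move=> hq oq hm ha hba hbk hkb hk1 hk2 hbr oy y0 yY hmax.
have q0 : 0 < q by elia.
have q1 : 1 < q by elia.
have pos : forall e, 0 < q^e by move=> e; rewrite expn_gt0 q0.
have oddp : forall e, odd (q^e) by move=> e; rewrite oddX oq orbT.
have hy1 : q^(m-1) <= y.
  rewrite leqNgt; apply/negP => hlt.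
  have [t /andP[ht1 ht2]] := @logP q y q1 y0.
  have htm : t < m - 1 by rewrite -(ltn_exp2l _ _ q1); plia.
  have := hmax (m - t.+1) (leq_subr _ _).
  have := @rot_splitP q m t.+1 0 y ltac:(elia) ht2.
  rewrite mul0n add0n addn0 => ->.
  have := leq_mul ht1 (leqnn (q^(m - t.+1))).
  rewrite -expnD (_ : t + (m - t.+1) = m - 1); last by elia.
  plia.
have [z ey] : exists z, y = q^(m-1) + z by exists (y - q^(m-1)); plia.
have zY : z < q^a + q^b by plia.
have ze : ~~ odd z.
  by move: oy; rewrite ey oddD oddp; case: (odd z).
have [zz|z0] := posnP z; first by rewrite ey zz addn0.
have [t /andP[ht1 ht2]] := @logP q z q1 z0.
have hta : t <= a.
  have := @p3 q b a hq hba; have := @p3 q a a.+1 hq (ltnSn a).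
  move=> h1 h2; have : q^t < q^a.+1 by plia.
  by rewrite ltn_exp2l.
have htm : t.+1 <= m - 1.
  rewrite leqNgt; apply/negP => htm.
  have eta : t = a by elia.
  have eb : b = 0 by elia.
  have e1 : a = 1 by elia.
  move: zY ht1 ze; rewrite eb eta e1 expn0 expn1 => zY ht1.
  have -> : z = q by elia.
  by rewrite oq.
have ey1 : y = q^(m - 1 - t.+1) * q^(t.+1) + z by rewrite ey -pw.
have := hmax (m - t.+1) (leq_subr _ _).
rewrite {1}ey1 rot_splitP //; last by elia.
move=> E1.
have em1 : q^(m-1) = q^t * q^(m - t.+1) by rewrite -expnD; congr (q ^ _); elia.
have ht3 : q^(t.+1) <= q^(m-1) by apply: pl; elia.
have z2 : z < 2 * q^t.
  rewrite ltnNge; apply/negP => h2.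
  have := leq_mul h2 (leqnn (q^(m - t.+1))).
  rewrite -mulnA -em1 => h3.
  plia.
have [w [ez w1]] : exists w, z = q^t + w /\ w < q^t by exists (z - q^t); plia.
have {}E1 : w * q^(m - t.+1) + q^(m - 1 - t.+1) <= q^t + w.
  move: E1; rewrite ey ez mulnDl -em1; plia.
have w0 : 0 < w.
  move: ze; rewrite ez oddD oddp; case: w {ez w1 E1} => //.
have [s /andP[hs1 hs2]] := @logP q w q1 w0.
have hst : s < t by rewrite -(ltn_exp2l _ _ q1); plia.
have hsg : s + (m - t.+1) <= t.
  rewrite leqNgt; apply/negP => h.
  have := leq_mul hs1 (leqnn (q^(m - t.+1))); rewrite -expnD => h1.
  have := @pl q t.+1 (s + (m - t.+1)) q0 h.
  have := @p3 q t t.+1 hq (ltnSn t).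
  plia.
have hsm : s.+1 <= m - 1 by elia.
have ey2 : y = (q^(m - 1 - s.+1) + q^(t - s.+1)) * q^(s.+1) + w.
  by rewrite ey ez mulnDl -!pw ?addnA //; elia.
have := hmax (m - s.+1) (leq_subr _ _).
rewrite {1}ey2 rot_splitP //; last by elia.
move=> E2.
have em2 : q^(m-1) = q^s * q^(m - s.+1) by rewrite -expnD; congr (q ^ _); elia.
have w2 : w < 2 * q^s.
  rewrite ltnNge; apply/negP => h2.
  have := leq_mul h2 (leqnn (q^(m - s.+1))).
  rewrite -mulnA -em2 => h3.
  plia.
have [w' [ew w'1]] : exists w', w = q^s + w' /\ w' < q^s by exists (w - q^s); plia.
have {}E2 : w' * q^(m - s.+1) + q^(m - 1 - s.+1) + q^(t - s.+1) <= q^t + q^s + w'.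
  move: E2; rewrite ey ez ew mulnDl -em2; plia.
have hs3 : m - 1 - s.+1 <= t.
  rewrite leqNgt; apply/negP => h.
  have := @pl q t.+1 (m - 1 - s.+1) q0 h.
  have := @p3 q t t.+1 hq (ltnSn t).
  have := @pl q s t q0 (ltnW hst).
  plia.
have [w'0|w'0] := posnP w'.
  move: E2 zY; rewrite w'0 ez ew addn0 mul0n add0n => E2 zY.
  have eta : t = a by elia.
  have hsb : s < b.
    rewrite -(ltn_exp2l _ _ q1); move: zY; rewrite eta; plia.
  have e3 : m - 1 - s.+1 = t by elia.
  move: E2; rewrite e3 => E2.
  have : q^(t - s.+1) <= q^s by plia.
  rewrite leq_exp2l // => h.
  elia.
have [r /andP[hr1 hr2]] := @logP q w' q1 w'0.
have hrs : r < s by rewrite -(ltn_exp2l _ _ q1); plia.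
have hrH : r + (m - s.+1) <= t.
  rewrite leqNgt; apply/negP => h.
  have := leq_mul hr1 (leqnn (q^(m - s.+1))); rewrite -expnD => h1.
  have := @pl q t.+1 (r + (m - s.+1)) q0 h.
  have := @p3 q t t.+1 hq (ltnSn t).
  have := @pl q s t q0 (ltnW hst).
  plia.
have hrm : r.+1 <= m - 1 by elia.
have ey3 : y = (q^(m - 1 - r.+1) + q^(t - r.+1) + q^(s - r.+1)) * q^(r.+1) + w'.
  by rewrite ey ez ew !mulnDl -!pw ?addnA //; elia.
have := hmax (m - r.+1) (leq_subr _ _).
rewrite {1}ey3 rot_splitP //; last by elia.
move=> E3.
have em3 : q^(m-1) = q^r * q^(m - r.+1) by rewrite -expnD; congr (q ^ _); elia.
have hr3 : m - 1 - r.+1 <= t.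
  rewrite leqNgt; apply/negP => h.
  have := @pl q t.+1 (m - 1 - r.+1) q0 h.
  have := leq_mul hr1 (leqnn (q^(m - r.+1))); rewrite -em3 => h1.
  move: E3; rewrite ey; plia.
have eta : t = a by elia.
have hsb : s < b.
  rewrite -(ltn_exp2l _ _ q1); move: zY; rewrite ez ew eta; plia.
elia.
Qed.

Theorem lemma18 (q m : nat) :
  prime_power q -> odd q -> 3 <= q -> 2 <= m ->
  second_largest_odd_coset_leader q m
    ((q - 1) * q ^ (m - 1) - q ^ ((2 * m - 1) %/ 3) - q ^ ((m - 1) %/ 3) - 1).
Proof.
move=> _ oq hq hm.
have q0 : 0 < q by lia.
have q1 : 1 < q by lia.
have oddp : forall e, odd (q^e) by move=> e; rewrite oddX oq orbT.
set a := (2 * m - 1) %/ 3; set b := (m - 1) %/ 3; set k := m %/ 3.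
have ha : a + k = m - 1 by rewrite /a /k; lia.
have hba : b < a by rewrite /a /b; lia.
have hbk : b <= k by rewrite /b /k; lia.
have hkb : k <= b + 1 by rewrite /b /k; lia.
have hk1 : 3 * k <= m by rewrite /k; lia.
have hk2 : m <= 3 * k + 2 by rewrite /k; lia.
have hbr : b = k -> 3 * k < m by rewrite /b /k; lia.
have hbk2 : b + k <= a by rewrite /a /b /k; lia.
have htie : m - 2 - b = a -> a - b - 1 <= b by rewrite /a /b; lia.
clearbody a b k.
have em : q^m = q * q^(m-1) by rewrite -expnS; congr (q ^ _); lia.
have h3 := @p3 q (m-1) m hq ltac:(lia).
have hpa := @pl q a (m-1) q0 ltac:(lia).
have hpb := @p3 q b (m-1) hq ltac:(lia).
have pos : forall e, 0 < q^e by move=> e; rewrite expn_gt0 q0.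
have pb := pos b.
set Y2 := q^(m-1) + q^a + q^b.
have hY2 : Y2 < q^m - 1 by rewrite /Y2; plia.
have ed : (q - 1) * q ^ (m - 1) - q ^ a - q ^ b - 1 = q^m - 1 - Y2.
  rewrite /Y2 em mulnBl mul1n; plia.
rewrite ed.
have nev : ~~ odd (q^m - 1) by rewrite oddB ?oddp // expn_gt0 q0.
have oY2 : odd Y2 by rewrite /Y2 !oddD !oddp.
have hY1 : q^(m-1) < q^m - 1 by plia.
split.
  split.
    by rewrite oddB; [rewrite oY2; move: nev; case: (odd _) | lia].
  apply: leader_of_ymax => //; try lia.
  rewrite (subKn (ltnW hY2)).
  exact: (@ymaxY2 q m a b k hq hm hba ha hbk2 hkb htie).
exists (q^m - 1 - q^(m-1)); split; [|split].
- rewrite /Y2; plia.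
- split.
    by rewrite oddB; [rewrite oddp; move: nev; case: (odd _) | lia].
  apply: leader_of_ymax => //; try lia.
  rewrite (subKn (ltnW hY1)).
  by apply: ymaxY1; lia.
- move=> x [ox hx] hdx.
  have xn : x < q^m - 1 by case: hx.
  have hy := @excl q m a b k (q^m - 1 - x) hq oq hm ha hba hbk hkb hk1 hk2 hbr.
  have xn' := ltnW xn.
  rewrite -hy.
  + by rewrite (subKn xn').
  + by rewrite oddB; [move: nev ox; do 2 case: (odd _) | done].
  + by rewrite subn_gt0.
  + move: hdx xn; rewrite -/Y2; clear; lia.
  + exact: ymax_of_leader.
Qed.
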